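(* For each user $i$ let $r_i^{max}=W\log_2(1+k_iP_{max})$, and let user $k$ satisfy $r_k^{max}=\max_i r_i^{max}$. If $B_k/(P_{max}-C_k)\ge 1$, then there exists an optimal solution of the Sum Throughput Maximization Problem (STMP) defined in the context in which $\tau_k=1$, i.e., user $k$ is allocated the entire scheduling frame.
   Context: There are $N$ users, indexed $i=1,\dots,N$, transmitting to a hybrid access point by time division within a scheduling frame of normalized length $1$. Given constants: bandwidth $W>0$; for each user $i$, $k_i>0$, an energy harvesting rate $C_i\ge 0$, an initial battery level $B_i\ge 0$; and a maximum transmit power $P_{max}>0$. STMP is the problem maximize $\sum_{i=1}^{N} W\tau_i\log_2(1+k_iP_i)$ subject to, for all users $i$ (and all $j\neq i$ where relevant): $B_i+C_i\tau_0+C_i\sum_{j=1}^{N}a_{ji}\tau_j+C_i\tau_i-P_i\tau_i\ge 0$ (energy causality), $a_{ij}+a_{ji}=1$, $P_i\le P_{max}$, $\sum_{i=0}^{N}\tau_i\le 1$, over variables $P_i\ge 0$, $\tau_i\ge 0$ ($i=1,\dots,N$), $\tau_0\ge 0$, and $a_{ij}\in\{0,1\}$, where $P_i$ is the transmit power of user $i$, $\tau_i$ its transmission time, $a_{ij}=1$ iff user $i$ is scheduled before user $j$, and $\tau_0$ is an initial waiting time during which all users only harvest energy. *)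

(* Defs.v *)
From HB Require Import structures.
From mathcomp Require Import all_boot all_order all_algebra.
From mathcomp Require Import all_classical all_reals all_analysis.
Set Implicit Arguments. Unset Strict Implicit. Unset Printing Implicit Defensive.
Import Order.TTheory GRing.Theory Num.Theory.
Local Open Scope ring_scope.

Definition log2 {R : realType} (x : R) : R := ln x / ln 2.

Definition rate {R : realType} (W k P : R) : R := W * log2 (1 + k * P).

Definition stmp_obj {R : realType} {N : nat} (W : R) (kk : 'I_N -> R)
  (tau : 'I_N -> R) (P : 'I_N -> R) : R :=
  \sum_(i < N) tau i * rate W (kk i) (P i).

(* Feasibility for STMP.  a i j = true iff user i is scheduled before user j. *)
Definition stmp_feasible {R : realType} {N : nat} (C B : 'I_N -> R) (Pmax : R)
  (tau0 : R) (tau : 'I_N -> R) (P : 'I_N -> R) (a : 'I_N -> 'I_N -> bool) : Prop :=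
  0 <= tau0 /\
      (forall i, 0 <= tau i) /\
      (forall i, 0 <= P i /\ P i <= Pmax) /\
      (forall i j, i != j -> (a i j + a j i)%N = 1%N) /\
      (forall i, 0 <= B i + C i * tau0
                     + C i * (\sum_(j < N | j != i) (a j i)%:R * tau j)
                     + C i * tau i - P i * tau i) /\
    tau0 + \sum_(i < N) tau i <= 1.

Definition stmp_optimal {R : realType} {N : nat} (W Pmax : R) (kk C B : 'I_N -> R)
  (tau0 : R) (tau : 'I_N -> R) (P : 'I_N -> R) (a : 'I_N -> 'I_N -> bool) : Prop :=
  stmp_feasible C B Pmax tau0 tau P a /\
  forall tau0' tau' P' a', stmp_feasible C B Pmax tau0' tau' P' a' ->
    stmp_obj W kk tau' P' <= stmp_obj W kk tau P.

(* Main.v *)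
Require Import Defs.
From HB Require Import structures.
From mathcomp Require Import all_boot all_order all_algebra.
From mathcomp Require Import all_classical all_reals all_analysis.
From mathcomp Require Import lra.
Import Order.TTheory GRing.Theory Num.Theory.
Local Open Scope ring_scope.

Lemma rate_mono (R : realType) (W k p q : R) :
  0 < W -> 0 < k -> 0 <= p -> p <= q -> rate W k p <= rate W k q.
Proof.
move=> W0 k0 p0 pq; rewrite /rate /log2.
have l2 : 0 < ln (2 : R) by apply: ln_gt0; rewrite ltr1n.
apply: ler_wpM2l; first exact: ltW.
rewrite ler_pM2r ?invr_gt0 //.
have h1 : 0 < 1 + k * p by rewrite ltr_pwDl // mulr_ge0 // ltW.
have h2 : 0 < 1 + k * q.
  by rewrite ltr_pwDl // mulr_ge0 ?(le_trans p0 pq) // ltW.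
rewrite ler_ln ?posrE // lerD2l; apply: ler_wpM2l => //; exact: ltW.
Qed.

Lemma rate_ge0 (R : realType) (W k p : R) :
  0 < W -> 0 < k -> 0 <= p -> 0 <= rate W k p.
Proof.
move=> W0 k0 p0; rewrite /rate /log2.
have l2 : 0 < ln (2 : R) by apply: ln_gt0; rewrite ltr1n.
apply: mulr_ge0; first exact: ltW.
apply: divr_ge0; last exact: ltW.
by apply: ln_ge0; rewrite lerDl; apply: mulr_ge0 => //; exact: ltW.
Qed.

Theorem corollary2 (R : realType) (N : nat) (W Pmax : R) (kk C B : 'I_N -> R)
  (k : 'I_N) :
  0 < W -> 0 < Pmax ->
  (forall i, 0 < kk i) -> (forall i, 0 <= C i) -> (forall i, 0 <= B i) ->
  (forall i, rate W (kk i) Pmax <= rate W (kk k) Pmax) ->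
  1 <= B k / (Pmax - C k) ->
  exists tau0 tau P a,
    stmp_optimal W Pmax kk C B tau0 tau P a /\ tau k = 1.
Proof.
move=> W0 P0 k0 C0 B0 hr hB.
have hPC : 0 < Pmax - C k.
  case: (ltP 0 (Pmax - C k)) => // hle.
  have : B k / (Pmax - C k) <= 0 by rewrite mulr_ge0_le0 // invr_le0.
  by move=> h; have := le_trans hB h; rewrite ler10.
have hBk : Pmax - C k <= B k by move: hB; rewrite ler_pdivlMr // mul1r.
exists 0, (fun i => if i == k then 1 else 0), (fun _ => Pmax),
  (fun i j : 'I_N => (i < j)%N).
split; last by rewrite eqxx.
have sumtau : \sum_(i < N) (if i == k then 1 else 0 : R) = 1.
  rewrite (bigD1 k) //= eqxx big1 ?addr0 // => i /negbTE ->; done.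
split.
  split; first by [].
  split; first by move=> i; case: (i == k).
  split; first by move=> i; rewrite ltW.
  split.
    move=> i j nij; case: (ltngtP i j) => //= h; last first.
      by move/val_inj: h => h; rewrite h eqxx in nij.
  split; last by rewrite add0r sumtau.
  move=> i; case: (eqVneq i k) => [->|nik].
    rewrite mulr0 addr0 /= !mulr1.
    set S := (X in C k * X).
    have hs : 0 <= C k * S.
      by apply: mulr_ge0 => //; apply: sumr_ge0 => j _; case: (j == k); rewrite ?mulr1 ?mulr0.
    move: hs hBk; set T := C k * S; lra.
  rewrite !mulr0 subr0 !addr0.
  apply: addr_ge0 => //; apply: mulr_ge0 => //; apply: sumr_ge0 => j _.
  by case: (j == k); rewrite ?mulr1 ?mulr0.
move=> tau0' tau' P' a' [t0 [tpos [Pb [_ [_ tsum]]]]].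
rewrite /stmp_obj.
have -> : \sum_(i < N) (if i == k then 1 else 0) * rate W (kk i) Pmax = rate W (kk k) Pmax.
  rewrite (bigD1 k) //= eqxx mul1r big1 ?addr0 // => i /negbTE ->; by rewrite mul0r.
apply: (@le_trans _ _ (\sum_(i < N) tau' i * rate W (kk k) Pmax)).
  apply: ler_sum => i _; apply: ler_wpM2l => //.
  by apply: (le_trans _ (hr i)); apply: rate_mono => //; case: (Pb i).
rewrite -mulr_suml.
have hr0 : 0 <= rate W (kk k) Pmax by apply: rate_ge0 => //; apply: ltW.
have hs : \sum_(i < N) tau' i <= 1 by move: tsum t0; lra.
move: hs hr0; set S := \sum_(i < N) tau' i; set r := rate _ _ _; nra.
Qed.
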